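(* Let $(X,\mu)$ be a non-atomic probability measure space equipped with a tree $\mathcal{T}$, with associated dyadic maximal operator $\mathcal{M}_{\mathcal{T}}$. For every $q$ with $0<q<1$ and every $f,h$ with $0<h\le f^q$, $$\int_X(\mathcal{M}_{\mathcal{T}}\phi)^q\,d\mu\le h\,\omega_q\Big(\frac{f^q}{h}\Big)$$ for every $\phi\in L^1(X,\mu)$ with $\phi\ge0$, $\int_X\phi\,d\mu=f$, $\int_X\phi^q\,d\mu=h$.
   Context: A set $\mathcal{T}$ of measurable subsets of $X$ is a tree if: (i) $X\in\mathcal{T}$ and $\mu(I)>0$ for every $I\in\mathcal{T}$; (ii) for every $I\in\mathcal{T}$ there is a finite or countable set $C(I)\subseteq\mathcal{T}$ with at least two elements, consisting of pairwise disjoint subsets of $I$ whose union is $I$; (iii) $\mathcal{T}=\bigcup_{m\ge0}\mathcal{T}_{(m)}$ where $\mathcal{T}_{(0)}=\{X\}$ and $\mathcal{T}_{(m+1)}=\bigcup_{I\in\mathcal{T}_{(m)}}C(I)$; (iv) $\lim_{m\to\infty}\sup_{I\in\mathcal{T}_{(m)}}\mu(I)=0$. The dyadic maximal operator is $\mathcal{M}_{\mathcal{T}}\phi(x)=\sup\{\frac{1}{\mu(I)}\int_I|\phi|\,d\mu : x\in I\in\mathcal{T}\}$. Here $\omega_q(z)=[H_q^{-1}(z)]^q$ for $z\ge1$, where $H_q(z)=(1-q)z^q+qz^{q-1}$ on $[1,\infty)$ (a strictly increasing bijection onto $[1,\infty)$). *)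

(* Defs.v *)
From HB Require Import structures.
From mathcomp Require Import all_boot all_order all_algebra.
From mathcomp Require Import all_classical all_reals all_analysis.
Set Implicit Arguments. Unset Strict Implicit. Unset Printing Implicit Defensive.
Import Order.TTheory GRing.Theory Num.Theory.
Local Open Scope classical_set_scope.
Local Open Scope ring_scope.

Section Defs.
Context (d : measure_display) (T : measurableType d) (R : realType).

Definition non_atomic (mu : set T -> \bar R) : Prop :=
  forall A, measurable A -> (0 < mu A)%E ->
    exists B, [/\ measurable B, B `<=` A & (0 < mu B < mu A)%E].

Fixpoint tree_level (C : set T -> set (set T)) (m : nat) : set (set T) :=
  match m with
  | 0%N => [set setT]
  | m'.+1 => \bigcup_(I in tree_level C m') C I
  end.

Definition is_tree (mu : set T -> \bar R) (Tr : set (set T)) : Prop :=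
  exists C : set T -> set (set T),
  [/\
      Tr setT /\ (forall I, Tr I -> measurable I /\ (0 < mu I)%E),
      (forall I, Tr I ->
         [/\ C I `<=` Tr /\ countable (C I),
             (exists J K, [/\ C I J, C I K & J <> K]),
             (forall J K, C I J -> C I K -> J <> K -> J `&` K = set0),
             (forall J, C I J -> J `<=` I) &
             \bigcup_(J in C I) J = I]),
      Tr = \bigcup_(m in [set: nat]) tree_level C m &
      (fun m => ereal_sup [set mu I | I in tree_level C m]) @ \oo --> 0%E].

Definition dyadic_max (mu : set T -> \bar R) (Tr : set (set T))
    (phi : T -> R) (x : T) : \bar R :=
  ereal_sup [set ((fine (mu I))^-1)%:E * \int[mu]_(y in I) (`|phi y|)%:E
            | I in [set I | Tr I /\ I x]]%E.

End Defs.

Definition Hq (R : realType) (q z : R) : R :=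
  (1 - q) * powR z q + q * powR z (q - 1).

Definition Hq_inv (R : realType) (q z : R) : R :=
  xget 1 [set y | 1 <= y /\ Hq q y = z].

Definition omega_q (R : realType) (q z : R) : R := powR (Hq_inv q z) q.

(* Main.v *)
Require Import Defs.
From HB Require Import structures.
From mathcomp Require Import all_boot all_order all_algebra.
From mathcomp Require Import all_classical all_reals all_analysis.
From mathcomp Require Import measurable_realfun.
From mathcomp Require Import ring lra.
Import Order.TTheory GRing.Theory Num.Theory.
Import numFieldNormedType.Exports.
Set Implicit Arguments. Unset Strict Implicit. Unset Printing Implicit Defensive.
Local Open Scope classical_set_scope.
Local Open Scope ring_scope.

Section RealLemmas.
Variable R : realType.
Implicit Types (q u v X Y : R).

Lemma expR_conv q X Y : 0 <= q <= 1 ->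
  expR (q * X + (1 - q) * Y) <= q * expR X + (1 - q) * expR Y.
Proof.
move=> /andP[q0 q1].
set Z := q * X + (1 - q) * Y.
have hX : expR Z * (1 + (X - Z)) <= expR X.
  have := expR_ge1Dx (X - Z); rewrite -(ler_pM2l (expR_gt0 Z)) -expRD.
  by rewrite (addrC Z) subrK.
have hY : expR Z * (1 + (Y - Z)) <= expR Y.
  have := expR_ge1Dx (Y - Z); rewrite -(ler_pM2l (expR_gt0 Z)) -expRD.
  by rewrite (addrC Z) subrK.
have e : expR Z = q * (expR Z * (1 + (X - Z))) + (1 - q) * (expR Z * (1 + (Y - Z))).
  rewrite /Z; ring.
rewrite e; apply: lerD; apply: ler_wpM2l => //; by rewrite subr_ge0.
Qed.

Lemma powR_key q u v : 0 < q < 1 -> 0 <= u -> 0 < v ->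
  powR u q <= (1 - q) * powR v q + q * (u * powR v (q - 1)).
Proof.
move=> /andP[q0 q1] u0 v0.
have q1' : 0 <= 1 - q by rewrite subr_ge0 ltW.
move: u0; rewrite le_eqVlt => /predU1P[<-|u0].
  rewrite powR0 ?gt_eqF// mul0r mulr0 addr0; apply: mulr_ge0 => //; exact: powR_ge0.
rewrite /powR !gt_eqF//.
have -> : u * expR ((q - 1) * ln v) = expR (ln u + (q - 1) * ln v).
  by rewrite expRD lnK.
have := @expR_conv q (ln u + (q - 1) * ln v) (q * ln v).
rewrite (ltW q0) (ltW q1) => /(_ isT).
have -> : q * (ln u + (q - 1) * ln v) + (1 - q) * (q * ln v) = q * ln u by ring.
by rewrite addrC.
Qed.

End RealLemmas.

Section RealLemmas2.
Variable R : realType.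
Implicit Types (q u v M A X Y z : R).

Lemma step_ineq q M A : 0 < q < 1 -> 0 < M -> 0 <= A ->
  (1 - q) * powR (Order.max M A) q + q * (A * powR (Order.max M A) (q - 1))
  <= (1 - q) * powR M q + q * (A * powR M (q - 1)).
Proof.
move=> q01 M0 A0; have [AM|MA] := leP A M.
  done.
rewrite mulr_powRB1 //; last by case/andP: q01.
have -> : (1 - q) * powR A q + q * powR A q = powR A q by ring.
exact: powR_key.
Qed.

Lemma Hq_derivable q x : 0 < x -> derivable (Hq q) x 1.
Proof.
move=> x0.
have -> : Hq q = ((1 - q) \*: (@powR R ^~ q)) + (q \*: (@powR R ^~ (q - 1))).
  by apply/funext => y; rewrite /Hq.
apply: derivableD; apply: derivableZ; apply: derivable_powR;
  by rewrite in_itv /= andbT.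
Qed.

Lemma Hq_inv_spec q z : 0 < q < 1 -> 1 <= z ->
  1 <= Hq_inv q z /\ Hq q (Hq_inv q z) = z.
Proof.
move=> /andP[q0 q1] z1.
suff : exists y, 1 <= y /\ Hq q y = z.
  by move=> ex; have := @xgetPex _ 1 [set y | 1 <= y /\ Hq q y = z] ex.
set c := powR (z / (1 - q)) (q^-1).
set b := Order.max 1 c.
have b1 : 1 <= b by rewrite le_max lexx.
have H1 : Hq q 1 = 1 by rewrite /Hq !powR1; ring.
have Hb : z <= Hq q b.
  have q1' : 0 < 1 - q by rewrite subr_gt0.
  have z0 : 0 <= z / (1 - q).
    by apply: divr_ge0; [exact: (le_trans ler01 z1)|exact: ltW].
  have cq : powR c q = z / (1 - q).
    by rewrite /c -powRrM mulVf ?gt_eqF// powRr1.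
  have c0 : 0 <= c by exact: powR_ge0.
  have : powR c q <= powR b q.
    apply: ge0_ler_powR; rewrite ?nnegrE ?(ltW q0)//.
      exact: (le_trans ler01 b1).
    by rewrite /b le_max lexx orbT.
  rewrite cq => hb.
  rewrite /Hq; apply: (@le_trans _ _ ((1 - q) * powR b q)).
    by rewrite -ler_pdivrMl// mulrC.
  by rewrite lerDl mulr_ge0 ?powR_ge0 ?ltW.
have cont : {within `[1, b]%classic, continuous (Hq q)}.
  apply: derivable_within_continuous => x; rewrite in_itv /= => /andP[x1 _].
  apply: Hq_derivable; exact: lt_le_trans x1.
have := @IVT _ (Hq q) 1 b z b1 cont.
case.
  by rewrite H1 ge_min le_max z1 Hb orbT.
move=> y yin Hy.
exists y; split => //; by move: yin; rewrite in_itv /= => /andP[].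
Qed.

End RealLemmas2.

Section RealLemmas3.
Variable R : realType.
Implicit Types (q F h X Y w : R).

Lemma final_alg q F h X Y : 0 < q < 1 -> 0 < h -> h <= F -> 0 <= X ->
  (1 - q) * X + q * Y <= F ->
  (forall w, 1 < w -> h * powR w q <= (1 - q) * X + q * (w * Y)) ->
  X <= h * powR (Hq_inv q (F / h)) q.
Proof.
move=> q01 h0 hF X0 hA hB; have /andP[q0 q1] := q01.
have q1' : 0 < 1 - q by rewrite subr_gt0.
have Fh1 : 1 <= F / h by rewrite ler_pdivlMr// mul1r.
have [w1 Hw] := @Hq_inv_spec R q _ q01 Fh1.
set w := Hq_inv q (F / h) in w1 Hw *.
have gen : forall v, 1 < v -> (v - 1) * (1 - q) * X <= v * F - h * powR v q.
  move=> v v1; have := hB v v1.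
  have : q * Y <= F - (1 - q) * X by rewrite lerBrDl.
  move=> hy hv.
  have v0 : 0 < v by apply: lt_trans v1.
  have : q * (v * Y) <= v * (F - (1 - q) * X).
    by rewrite mulrCA ler_pM2l.
  move=> hvy.
  have : h * powR v q <= (1 - q) * X + v * (F - (1 - q) * X).
    exact: (le_trans hv (lerD (lexx _) hvy)).
  move=> hh; rewrite -subr_ge0; rewrite -subr_ge0 in hh.
  have -> : v * F - h * powR v q - (v - 1) * (1 - q) * X =
    (1 - q) * X + v * (F - (1 - q) * X) - h * powR v q by ring.
  exact: hh.
move: w1; rewrite le_eqVlt => /predU1P[w1|w1].
  rewrite -w1 powR1 mulr1.
  have Fh : F = h.
    move: Hw; rewrite -w1 /Hq !powR1 => /esym.
    have -> : (1 - q) * 1 + q * 1 = 1 by ring.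
    by move/(congr1 (fun t => t * h)); rewrite divfK ?gt_eqF// mul1r.
  apply/ler_addgt0Pr => e e0.
  set v := 1 + e / h.
  have v1 : 1 < v by rewrite /v ltrDl divr_gt0.
  have v0 : 0 < v by apply: lt_trans v1.
  have := gen v v1; rewrite Fh => g.
  set P := powR v q in g.
  have key : v <= P * ((1 - q) * v + q).
    have := @powR_key R q 1 v q01 ler01 v0.
    rewrite powR1 mul1r => k.
    have e1 : v * powR v (q - 1) = P by rewrite mulr_powRB1 ?(ltW v0).
    have : v * 1 <= v * ((1 - q) * P + q * powR v (q - 1)).
      by rewrite ler_pM2l.
    rewrite mulr1 => k2; apply: (le_trans k2).
    rewrite mulrDr !mulrA (mulrC v (1 - q)) (mulrC v q) -!mulrA e1 -/P; lra.
  have P0 : 0 <= P by exact: powR_ge0.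
  have hb : v * h - h * P <= h * v * ((1 - q) * (v - 1)).
    set den := (1 - q) * v + q in key.
    have den0 : 0 < den by rewrite /den addr_gt0// mulr_gt0.
    have : v * (2 - den) <= P.
      rewrite -(ler_pM2r den0).
      have sq : 0 <= v * (den - 1) ^+ 2 by exact: mulr_ge0 (ltW v0) (sqr_ge0 _).
      have -> : v * (2 - den) * den = v - v * (den - 1) ^+ 2 by ring.
      apply: le_trans key; by rewrite gerBl.
    have hden : den - 1 = (1 - q) * (v - 1) by rewrite /den; ring.
    rewrite -hden => k3.
    have : h * (v * (2 - den)) <= h * P by rewrite ler_pM2l.
    lra.
  have : (v - 1) * (1 - q) * X <= (v - 1) * (1 - q) * (h * v).
    apply: (le_trans g); move: hb; rewrite (mulrC v h); lra.
  rewrite ler_pM2l ?mulr_gt0 ?subr_gt0// /v; move=> k4.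
  apply: (le_trans k4); rewrite mulrDr mulr1 mulrCA mulfV ?gt_eqF// mulr1.
  by [].
have := gen w w1.
have -> : w * F - h * powR w q = (w - 1) * (1 - q) * (h * powR w q).
  have -> : F = h * (F / h) by rewrite mulrCA mulfV ?gt_eqF// mulr1.
  rewrite -Hw /Hq.
  have e1 : w * powR w (q - 1) = powR w q by rewrite mulr_powRB1 ?ltW// (lt_trans ltr01 w1).
  rewrite -e1; ring.
by rewrite ler_pM2l ?mulr_gt0 ?subr_gt0.
Qed.

End RealLemmas3.

Section Partition.
Context d (T : measurableType d) (R : realType) (mu : {measure set T -> \bar R}).
Variable P : set (set T).
Hypothesis Pc : countable P.
Hypothesis Pm : forall J, P J -> measurable J.
Hypothesis Pd : forall J K x, P J -> P K -> J x -> K x -> J = K.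
Hypothesis Pcov : forall x, exists J, P J /\ J x.

Lemma enum_part : exists F : nat -> set T,
  [/\ (forall i, F i = set0 \/ P (F i)), trivIset setT F & \bigcup_i F i = setT].
Proof.
have [g ginj] := countable_injP _ Pc.
pose F i := xget set0 [set J | P J /\ g J = i].
have FP i : F i = set0 \/ (P (F i) /\ g (F i) = i).
  rewrite /F; case: xgetP => [J _ [PJ gJ]|_]; [by right|by left].
exists F; split.
- by move=> i; case: (FP i) => [->|[]]; [left|right].
- move=> i j _ _ [x [Fix Fjx]].
  case: (FP i) => [e|[PFi gi]]; first by move: Fix; rewrite e.
  case: (FP j) => [e|[PFj gj]]; first by move: Fjx; rewrite e.
  by rewrite -gi -gj (Pd PFi PFj Fix Fjx).
- apply/seteqP; split => // x _.
  have [J [PJ Jx]] := Pcov x.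
  exists (g J) => //.
  suff -> : F (g J) = J by [].
  rewrite /F; apply: xget_unique => // K [PK gK].
  by apply: ginj => //; exact/mem_set.
Qed.

Local Open Scope ereal_scope.
Lemma part_integral_le (g k : T -> \bar R) :
  measurable_fun setT g -> measurable_fun setT k ->
  (forall x, (0 <= g x)%E) -> (forall x, (0 <= k x)%E) ->
  (forall J, P J -> (\int[mu]_(x in J) g x <= \int[mu]_(x in J) k x)%E) ->
  (\int[mu]_x g x <= \int[mu]_x k x)%E.
Proof.
move=> mg mk g0 k0 Hle.
have [F [FP tF cF]] := enum_part.
have mF i : measurable (F i) by case: (FP i) => [->|/Pm].
rewrite -cF ge0_integral_bigcup //; last by rewrite cF.
rewrite ge0_integral_bigcup //; last by rewrite cF.
apply: lee_nneseries => [i _ _|i _]; first exact: integral_ge0.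
by case: (FP i) => [->|/Hle//]; rewrite !integral_set0.
Qed.

Local Close Scope ereal_scope.
Lemma part_measurable (g : T -> R) :
  (forall J x y, P J -> J x -> J y -> g x = g y) -> measurable_fun setT g.
Proof.
move=> gc _ B mB; rewrite setTI.
have [F [FP tF cF]] := enum_part.
have -> : g @^-1` B = \bigcup_i (F i `&` g @^-1` B).
  by rewrite -setI_bigcupl cF setTI.
apply: bigcupT_measurable => i.
case: (FP i) => [->|PF]; first by rewrite set0I.
have [[y [Fy By]]|nE] := pselect (exists y, F i y /\ B (g y)).
  suff -> : F i `&` g @^-1` B = F i by exact: Pm.
  apply/seteqP; split => [x []//|x Fx]; split => //.
  by rewrite /preimage /= (gc _ _ _ PF Fx Fy).
suff -> : F i `&` g @^-1` B = set0 by [].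
by apply/seteqP; split => // x [Fx Bx]; apply: nE; exists x.
Qed.

End Partition.

Section Tree.
Context d (T : measurableType d) (R : realType) (mu : probability T R).
Variables (Tr : set (set T)) (C : set T -> set (set T)).
Hypothesis HTr : forall I, Tr I -> measurable I /\ (0 < mu I)%E.
Hypothesis HC : forall I, Tr I ->
         [/\ C I `<=` Tr /\ countable (C I),
             (exists J K, [/\ C I J, C I K & J <> K]),
             (forall J K, C I J -> C I K -> J <> K -> J `&` K = set0),
             (forall J, C I J -> J `<=` I) &
             \bigcup_(J in C I) J = I].
Hypothesis HTrl : Tr = \bigcup_(m in [set: nat]) tree_level C m.

Local Notation lev := (tree_level C).

Lemma lev_Tr n I : lev n I -> Tr I.
Proof. by move=> h; rewrite HTrl; exists n. Qed.

Lemma lev_cover n x : exists I, lev n I /\ I x.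
Proof.
elim: n => [|n [I [lI Ix]]]; first by exists setT.
have [_ _ _ _ cov] := HC (lev_Tr lI).
move: Ix; rewrite -cov => -[J CJ Jx].
by exists J; split => //; exists I.
Qed.

Lemma lev_disj n I J x : lev n I -> lev n J -> I x -> J x -> I = J.
Proof.
elim: n I J => [|n IH] I J.
  by move=> /= -> ->.
move=> [I' lI' CI] [J' lJ' CJ] Ix Jx.
have [_ _ _ subI _] := HC (lev_Tr lI').
have [_ _ _ subJ _] := HC (lev_Tr lJ').
have e := IH _ _ lI' lJ' (subI _ CI _ Ix) (subJ _ CJ _ Jx).
subst J'.
have [_ _ disj _ _] := HC (lev_Tr lI').
apply: contrapT => IJ.
have := disj _ _ CI CJ IJ.
by move/seteqP => [/(_ x (conj Ix Jx))].
Qed.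

Lemma lev_nest n k J : (k <= n)%N -> lev n J -> exists I, lev k I /\ J `<=` I.
Proof.
elim: n J => [|n IH] J.
  by rewrite leqn0 => /eqP -> lJ; exists J; split.
rewrite leq_eqVlt => /orP[/eqP -> lJ|]; first by exists J; split.
rewrite ltnS => kn [J' lJ' CJ].
have [_ _ _ subJ _] := HC (lev_Tr lJ').
have [I [lI J'I]] := IH J' kn lJ'.
by exists I; split => //; apply: subset_trans J'I; exact: subJ.
Qed.

Lemma lev_countable n : countable (lev n).
Proof.
elim: n => [|n IH]; first exact: countable1.
apply: bigcup_countable => // I lI.
by have [[_ ?] _ _ _ _] := HC (lev_Tr lI).
Qed.

Definition cell n x : set T := xget setT [set I | lev n I /\ I x].

Lemma cellP n x : lev n (cell n x) /\ cell n x x.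
Proof. exact: (xgetPex setT (lev_cover n x)). Qed.

Lemma cell_eq n x I : lev n I -> I x -> cell n x = I.
Proof.
move=> lI Ix; have [lc cx] := cellP n x.
exact: lev_disj lc lI cx Ix.
Qed.

Lemma cell_const n k J x y : (k <= n)%N -> lev n J -> J x -> J y ->
  cell k x = cell k y.
Proof.
move=> kn lJ Jx Jy; have [I [lI JI]] := lev_nest kn lJ.
by rewrite (cell_eq lI (JI _ Jx)) (cell_eq lI (JI _ Jy)).
Qed.


Lemma lev_meas n J : lev n J -> measurable J.
Proof. by move=> /lev_Tr /HTr []. Qed.

Lemma lev_part_props n :
  [/\ countable (lev n), (forall J, lev n J -> measurable J),
      (forall J K x, lev n J -> lev n K -> J x -> K x -> J = K) &
      (forall x, exists J, lev n J /\ J x)].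
Proof.
split; [exact: lev_countable|exact: lev_meas| |exact: lev_cover].
by move=> J K x lJ lK Jx Kx; exact: lev_disj lJ lK Jx Kx.
Qed.

Lemma mu_fin J : measurable J -> mu J = (fine (mu J))%:E.
Proof.
move=> mJ; rewrite fineK// ge0_fin_numE ?measure_ge0//.
by rewrite (le_lt_trans (probability_le1 mu mJ))// ltey.
Qed.

Lemma mu_pos J : Tr J -> 0 < fine (mu J).
Proof.
move=> TJ; have [mJ J0] := HTr TJ.
by rewrite -lte_fin -mu_fin.
Qed.

Variables (phi : T -> R) (q f : R).
Hypothesis phi0 : forall x, 0 <= phi x.
Hypothesis mphi : measurable_fun setT phi.
Hypothesis iphi : mu.-integrable setT (EFin \o phi).
Hypothesis intf : (\int[mu]_x (phi x)%:E = f%:E)%E.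
Hypothesis q01 : 0 < q < 1.
Hypothesis f0 : 0 < f.

Lemma iphiJ J : measurable J -> mu.-integrable J (EFin \o phi).
Proof. by move=> mJ; apply: integrableS iphi. Qed.

Lemma int_fin J : measurable J ->
  (\int[mu]_(x in J) (phi x)%:E)%E = (fine (\int[mu]_(x in J) (phi x)%:E))%:E.
Proof. by move=> mJ; rewrite fineK//; have := integrable_fin_num mJ (iphiJ mJ). Qed.

Definition avg (I : set T) : R :=
  fine (\int[mu]_(y in I) (phi y)%:E) / fine (mu I).

Lemma avg_ge0 I : Tr I -> 0 <= avg I.
Proof.
move=> TI; have [mI _] := HTr TI; apply: divr_ge0; last exact: ltW (mu_pos TI).
rewrite -lee_fin -int_fin//; apply: integral_ge0 => x _; rewrite lee_fin; exact: phi0.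
Qed.

Lemma int_avg I : Tr I ->
  (\int[mu]_(y in I) (phi y)%:E)%E = (fine (mu I) * avg I)%:E.
Proof.
move=> TI; have [mI _] := HTr TI.
by rewrite int_fin// /avg mulrC divfK// gt_eqF// mu_pos.
Qed.

Definition Av n x := avg (cell n x).

Fixpoint mN n x := match n with
  | 0%N => Av 0 x
  | n'.+1 => Num.max (mN n' x) (Av n'.+1 x) end.

Lemma Av0 x : Av 0 x = f.
Proof.
have [l0 _] := cellP 0 x; rewrite /Av /= in l0 *; rewrite l0 /avg.
rewrite probability_setT /= divr1.
by rewrite intf.
Qed.

Lemma mN_ge n x k : (k <= n)%N -> Av k x <= mN n x.
Proof.
elim: n k => [|n IH] k; first by rewrite leqn0 => /eqP ->.
rewrite leq_eqVlt => /orP[/eqP ->|]; first by rewrite /= le_max lexx orbT.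
by rewrite ltnS => /IH kn /=; rewrite le_max kn.
Qed.

Lemma mN_gef n x : f <= mN n x.
Proof. by rewrite -(Av0 x); exact: mN_ge. Qed.

Lemma mN_gt0 n x : 0 < mN n x.
Proof. exact: lt_le_trans f0 (mN_gef n x). Qed.

Lemma mN_le n x : exists2 k, (k <= n)%N & mN n x = Av k x.
Proof.
elim: n => [|n [k kn e]]; first by exists 0%N.
rewrite /= e; have [_|_] := leP (Av k x) (Av n.+1 x).

  by exists n.+1.
by exists k => //; exact: leqW.
Qed.

Lemma mN_nd x : nondecreasing_seq (mN ^~ x).
Proof.
apply/nondecreasing_seqP => n /=; by rewrite le_max lexx.
Qed.

Lemma mN_const n m J x y : (m <= n)%N -> lev n J -> J x -> J y -> mN m x = mN m y.
Proof.
move=> mn lJ Jx Jy; elim: m mn => [|m IH] mn.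
  by rewrite /= /Av (cell_const _ lJ Jx Jy).
rewrite /= IH ?(ltnW mn)// /Av (cell_const _ lJ Jx Jy)//.
Qed.

Lemma mN_meas n : measurable_fun setT (mN n).
Proof.
have [Pc Pm Pd Pcov] := lev_part_props n.
apply: (part_measurable Pc Pm Pd Pcov) => J x y lJ Jx Jy.
exact: mN_const (leqnn n) lJ Jx Jy.
Qed.


Definition G n x := (1 - q) * powR (mN n x) q + q * powR (mN n x) (q - 1) * phi x.

Lemma q0 : 0 < q. Proof. by case/andP: q01. Qed.
Lemma q1 : 0 < 1 - q. Proof. by rewrite subr_gt0; case/andP: q01. Qed.

Lemma G_meas n : measurable_fun setT (fun x => (G n x)%:E).
Proof.
apply/measurable_EFinP; rewrite /G.
apply: measurable_funD; first apply: measurable_funM => //.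
  exact: measurableT_comp (measurable_powR _) (mN_meas n).
apply: measurable_funM => //; apply: measurable_funM => //.
exact: measurableT_comp (measurable_powR _) (mN_meas n).
Qed.

Lemma G_ge0 n x : 0 <= G n x.
Proof.
rewrite /G; apply: addr_ge0; apply: mulr_ge0; rewrite ?powR_ge0 ?(ltW q1)//.
by apply: mulr_ge0; rewrite ?powR_ge0 ?(ltW q0).
Qed.

Lemma int_affine J a b : measurable J -> 0 <= a -> 0 <= b ->
  (\int[mu]_(x in J) (a + b * phi x)%:E = a%:E * mu J + b%:E * \int[mu]_(x in J) (phi x)%:E)%E.
Proof.
move=> mJ a0 b0.
under eq_integral => x _ do rewrite EFinD EFinM.
rewrite ge0_integralD//; last 2 first.
- by move=> x _; rewrite lee_fin mulr_ge0.
- apply: (measurable_funeM (f := EFin \o phi)); apply/measurable_EFinP.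
  exact: measurable_funS mphi.
rewrite (_ : (\int[mu]_(_ in J) a%:E = a%:E * mu J)%E); last exact: integral_cst.
rewrite ge0_integralZl_EFin//.
- by move=> x _; rewrite lee_fin.
- by apply/measurable_EFinP; exact: measurable_funS mphi.
Qed.

Lemma Phi_step n : (\int[mu]_x (G n.+1 x)%:E <= \int[mu]_x (G n x)%:E)%E.
Proof.
have [Pc Pm Pd Pcov] := lev_part_props n.+1.
apply: (part_integral_le Pc Pm Pd Pcov); try exact: G_meas.
  by move=> x; rewrite lee_fin G_ge0.
  by move=> x; rewrite lee_fin G_ge0.
move=> J lJ.
have TJ := lev_Tr lJ; have [mJ J0] := HTr TJ.
have [x0 Jx0] : exists x, J x.
  apply: contrapT => nE; move: J0.
  suff -> : J = set0 by rewrite measure0 ltxx.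
  by apply/seteqP; split => // x Jx; apply: nE; exists x.
set M := mN n x0; set A := avg J.
have eM x : J x -> mN n x = M.
  by move=> Jx; exact: mN_const (leqnSn n) lJ Jx Jx0.
have eA x : J x -> Av n.+1 x = A.
  by move=> Jx; rewrite /Av (cell_eq lJ Jx).
have M0 : 0 < M by exact: mN_gt0.
have A0 : 0 <= A by exact: avg_ge0.
set M' := Num.max M A.
have M'0 : 0 < M' by rewrite lt_max M0.
rewrite (@eq_integral _ _ _ mu J (fun x => ((1 - q) * powR M' q + q * powR M' (q - 1) * phi x)%:E)); last first.
  by move=> x /set_mem Jx; rewrite /G /= (eM x Jx) (eA x Jx).
rewrite [leRHS](@eq_integral _ _ _ mu J (fun x => ((1 - q) * powR M q + q * powR M (q - 1) * phi x)%:E)); last first.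
  by move=> x /set_mem Jx; rewrite /G /= (eM x Jx).
rewrite !int_affine//; try (by apply: mulr_ge0; rewrite ?powR_ge0 ?(ltW q0) ?(ltW q1)).
rewrite int_avg// (mu_fin mJ) -!EFinM -!EFinD lee_fin.
have m0 := mu_pos TJ.
have := @step_ineq R q M A q01 M0 A0.
rewrite -/M' => st.
have e1 : forall P Q : R, P * fine (mu J) + Q * (fine (mu J) * A) = fine (mu J) * (P + Q * A).
  by move=> P Q; ring.
rewrite !e1 ler_pM2l//.
by move: st; rewrite !(mulrC A) !mulrA.
Qed.


Lemma Phi_le n : (\int[mu]_x (G n x)%:E <= (powR f q)%:E)%E.
Proof.
elim: n => [|n IH]; last exact: le_trans (Phi_step n) IH.
have -> : (\int[mu]_x (G 0 x)%:E =
   \int[mu]_(x in setT) ((1 - q) * powR f q + q * powR f (q - 1) * phi x)%:E)%E.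
  by apply: eq_integral => x _; rewrite /G /= Av0.
rewrite int_affine //; last 2 first.
- by apply: mulr_ge0; rewrite ?powR_ge0 ?(ltW q1).
- by apply: mulr_ge0; rewrite ?powR_ge0 ?(ltW q0).
rewrite probability_setT mule1.
have -> : (\int[mu]_(x in setT) (phi x)%:E)%E = f%:E by exact: intf.
rewrite -EFinM -EFinD lee_fin -mulrA (mulrC _ f) mulr_powRB1 ?(ltW f0) ?q0//.
by rewrite -mulrDl subrK mul1r.
Qed.

Lemma mpow n r : measurable_fun setT (fun x => powR (mN n x) r).
Proof. exact: measurableT_comp (measurable_powR _) (mN_meas n). Qed.

Lemma fin_split (X Y : \bar R) a b c : 0 < a -> 0 < b -> (0 <= X)%E -> (0 <= Y)%E ->
  (a%:E * X + b%:E * Y <= c%:E)%E -> X = (fine X)%:E /\ Y = (fine Y)%:E.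
Proof.
move: X Y => [x| |] [y| |] //= a0 b0 _ _; rewrite ?gt0_mulye ?lte_fin//.
all: by rewrite ?gt0_mulye ?gt0_muley ?lte_fin// ?addey ?addye// leNgt ltey.
Qed.

Variable h : R.
Hypothesis h0 : 0 < h.
Hypothesis hF : h <= powR f q.
Hypothesis inth : (\int[mu]_x (powR (phi x) q)%:E = h%:E)%E.

Lemma Xn_bound n : (\int[mu]_x (powR (mN n x) q)%:E <=
   (h * powR (Hq_inv q (powR f q / h)) q)%:E)%E.
Proof.
set X := (\int[mu]_x (powR (mN n x) q)%:E)%E.
set Y := (\int[mu]_x (powR (mN n x) (q - 1) * phi x)%:E)%E.
have mY : measurable_fun setT (fun x => (powR (mN n x) (q - 1) * phi x)%:E).
  by apply/measurable_EFinP; apply: measurable_funM => //; exact: mpow.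
have mX : measurable_fun setT (fun x => (powR (mN n x) q)%:E).
  by apply/measurable_EFinP; exact: mpow.
have X0 : (0 <= X)%E by apply: integral_ge0 => x _; rewrite lee_fin powR_ge0.
have Y0 : (0 <= Y)%E.
  by apply: integral_ge0 => x _; rewrite lee_fin mulr_ge0 ?powR_ge0.
have eG : (\int[mu]_x (G n x)%:E = (1 - q)%:E * X + q%:E * Y)%E.
  have -> : (\int[mu]_x (G n x)%:E = \int[mu]_x ((1 - q)%:E * (powR (mN n x) q)%:E
      + q%:E * (powR (mN n x) (q - 1) * phi x)%:E))%E.
    by apply: eq_integral => x _; rewrite /G -!EFinM -EFinD mulrA.
  have hq1 := ltW q1; have hq0 := ltW q0.
  rewrite ge0_integralD//.
  - by rewrite !ge0_integralZl_EFin// => x _; rewrite lee_fin ?mulr_ge0 ?powR_ge0.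
  - by move=> x _; rewrite mule_ge0// lee_fin ?powR_ge0.
  - exact: measurable_funeM.
  - by move=> x _; rewrite mule_ge0// lee_fin ?mulr_ge0 ?powR_ge0.
  - exact: measurable_funeM.
have hA := Phi_le n; rewrite eG in hA.
have [eX eY] := fin_split q1 q0 X0 Y0 hA.
rewrite eX lee_fin.
apply: (@final_alg R q _ h _ (fine Y)) => //.
- exact: fine_ge0.
- by rewrite -lee_fin EFinD !EFinM -eX -eY.
move=> w w1; have w0 : 0 < w by exact: lt_trans w1.
rewrite -lee_fin EFinD !EFinM -eX -eY.
have mphq : measurable_fun setT (fun x => (powR (phi x) q)%:E).
  by apply/measurable_EFinP; exact: measurableT_comp (measurable_powR _) mphi.
have e1 : (\int[mu]_x ((powR w q)%:E * (powR (phi x) q)%:E) =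
    (powR w q)%:E * \int[mu]_x (powR (phi x) q)%:E)%E.
  by rewrite ge0_integralZl_EFin ?powR_ge0// => x _; rewrite lee_fin powR_ge0.
have e2 : (\int[mu]_x ((1 - q)%:E * (powR (mN n x) q)%:E) = (1 - q)%:E * X)%E.
  by rewrite ge0_integralZl_EFin ?(ltW q1)// => x _; rewrite lee_fin powR_ge0.
have e3 : (\int[mu]_x ((q * w)%:E * (powR (mN n x) (q - 1) * phi x)%:E) = (q * w)%:E * Y)%E.
  rewrite ge0_integralZl_EFin ?mulr_ge0 ?(ltW q0) ?(ltW w0)// => x _.
  by rewrite lee_fin mulr_ge0 ?powR_ge0.
have e4 : (\int[mu]_x ((1 - q)%:E * (powR (mN n x) q)%:E + (q * w)%:E * (powR (mN n x) (q - 1) * phi x)%:E)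
   = \int[mu]_x ((1 - q)%:E * (powR (mN n x) q)%:E) + \int[mu]_x ((q * w)%:E * (powR (mN n x) (q - 1) * phi x)%:E))%E.
  rewrite ge0_integralD//.
  - by move=> x _; rewrite mule_ge0// lee_fin ?powR_ge0 ?(ltW q1).
  - exact: measurable_funeM.
  - by move=> x _; rewrite mule_ge0// lee_fin ?mulr_ge0 ?powR_ge0 ?(ltW q0) ?(ltW w0).
  - exact: measurable_funeM.
rewrite -inth muleC -e1 muleA -EFinM -e2 -e3 -e4.
apply: ge0_le_integral => //.
- by move=> x _; rewrite mule_ge0// lee_fin powR_ge0.
- exact: measurable_funeM.
- apply: emeasurable_funD; exact: measurable_funeM.
move=> x _; rewrite -!EFinM -EFinD lee_fin -powRM ?(ltW w0)//.
have := @powR_key R q (w * phi x) (mN n x) q01 (mulr_ge0 (ltW w0) (phi0 x)) (mN_gt0 n x).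
by rewrite -!mulrA (mulrC (powR _ _) (phi x)).
Qed.


Lemma dyadic_eq x : dyadic_max mu Tr phi x = ereal_sup (range (fun k => (Av k x)%:E)).
Proof.
rewrite /dyadic_max; congr ereal_sup.
apply/seteqP; split => z /=.
  move=> [I [TI Ix] <-].
  have := TI; rewrite HTrl => -[k _ lI].
  exists k => //; rewrite /Av (cell_eq lI Ix).
  have -> : (\int[mu]_(y in I) (`|phi y|)%:E = \int[mu]_(y in I) (phi y)%:E)%E.
    by apply: eq_integral => y _; rewrite ger0_norm.
  by rewrite int_avg// -EFinM mulrA mulVf ?mul1r// gt_eqF// mu_pos.
move=> [k _ <-].
have [lc cx] := cellP k x.
exists (cell k x); first by split => //; exact: lev_Tr lc.
have TI := lev_Tr lc.
have -> : (\int[mu]_(y in cell k x) (`|phi y|)%:E = \int[mu]_(y in cell k x) (phi y)%:E)%E.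
  by apply: eq_integral => y _; rewrite ger0_norm.
by rewrite int_avg// -EFinM mulrA mulVf ?mul1r// gt_eqF// mu_pos.
Qed.

Lemma Av_ge0 k x : 0 <= Av k x.
Proof. by have [lc _] := cellP k x; apply: avg_ge0; exact: lev_Tr lc. Qed.

Lemma pow_sup x : poweR (ereal_sup (range (fun k => (Av k x)%:E))) q =
  ereal_sup (range (fun n => (powR (mN n x) q)%:E)).
Proof.
set Sa := ereal_sup _; set Sp := ereal_sup _.
have qn0 : q != 0 by rewrite gt_eqF// q0.
have Sa_ge k : ((Av k x)%:E <= Sa)%E by apply: ereal_sup_ubound; exists k.
have Sp_ge n : ((powR (mN n x) q)%:E <= Sp)%E by apply: ereal_sup_ubound; exists n.
apply/eqP; rewrite eq_le; apply/andP; split; last first.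
  apply: ge_ereal_sup => _ [n _ <-].
  have [k kn ->] := mN_le n x.
  have hs := Sa_ge k; clear Sa_ge Sp_ge; move: hs; case: Sa => [s| |] //= hs.
    rewrite lee_fin; apply: ge0_ler_powR; rewrite ?nnegrE ?(ltW q0) ?Av_ge0//.
      by rewrite -lee_fin; apply: le_trans hs; rewrite lee_fin Av_ge0.
  by rewrite (negbTE qn0) leey.
have hs := Sp_ge 0%N; move: hs; clearbody Sp; case: Sp Sp_ge => [s| |] Sp_ge //=; last by move=> _; rewrite leey.
move=> s0.
have s00 : 0 <= s by rewrite -lee_fin; apply: le_trans s0; rewrite lee_fin powR_ge0.
have hSa : (Sa <= (powR s q^-1)%:E)%E.
  apply: ge_ereal_sup => _ [k _ <-]; rewrite lee_fin.
  apply: (le_trans (mN_ge x (leqnn k))).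
  have -> : mN k x = powR (powR (mN k x) q) q^-1.
    by rewrite -powRrM mulfV// powRr1// ltW// mN_gt0.
  apply: ge0_ler_powR; rewrite ?nnegrE ?invr_ge0 ?(ltW q0) ?powR_ge0//.
  by rewrite -lee_fin; exact: Sp_ge.
have hs := Sa_ge 0%N; clear Sa_ge; move: hs hSa; case: Sa => [a| |] //= a0.
rewrite !lee_fin => ha.
have -> : s = powR (powR s q^-1) q by rewrite -powRrM mulVf// powRr1.
apply: ge0_ler_powR; rewrite ?nnegrE ?(ltW q0) ?powR_ge0//.
by rewrite -lee_fin; apply: le_trans a0; rewrite lee_fin Av_ge0.
Qed.

Lemma pow_nd x : nondecreasing_seq (fun n => (powR (mN n x) q)%:E).
Proof.
move=> m n mn; rewrite lee_fin; apply: ge0_ler_powR; rewrite ?nnegrE ?(ltW q0).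
- by [].
- exact: ltW (mN_gt0 m x).
- exact: ltW (mN_gt0 n x).
- exact: (mN_nd x mn).
Qed.

Lemma main_tree : (\int[mu]_x poweR (dyadic_max mu Tr phi x) q <=
   (h * powR (Hq_inv q (powR f q / h)) q)%:E)%E.
Proof.
have -> : (fun x => poweR (dyadic_max mu Tr phi x) q) =
    (fun x => limn (fun n => (powR (mN n x) q)%:E)).
  apply/funext => x; rewrite dyadic_eq pow_sup.
  by apply/esym/cvg_lim => //; exact: ereal_nondecreasing_cvgn (pow_nd x).
rewrite monotone_convergence//; first last.
- by move=> x _; exact: pow_nd.
- by move=> n x _; rewrite lee_fin powR_ge0.
- by move=> n; apply/measurable_EFinP; exact: mpow.
apply: lime_le.
  apply: ereal_nondecreasing_is_cvgn => m n mn.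
  apply: ge0_le_integral => //.
  - by move=> x _; rewrite lee_fin powR_ge0.
  - by apply/measurable_EFinP; exact: mpow.
  - by apply/measurable_EFinP; exact: mpow.
  - by move=> x _; exact: pow_nd.
by apply: nearW => n; exact: Xn_bound.
Qed.

End Tree.




Theorem lemma3p1 (d : measure_display) (T : measurableType d) (R : realType)
  (mu : probability T R) (Tr : set (set T)) (q f h : R) (phi : T -> R) :
  non_atomic mu -> is_tree mu Tr ->
  0 < q < 1 -> 0 < h -> h <= powR f q ->
  measurable_fun setT phi -> mu.-integrable setT (EFin \o phi) ->
  (forall x, 0 <= phi x) ->
  (\int[mu]_x (phi x)%:E = f%:E)%E ->
  (\int[mu]_x (powR (phi x) q)%:E = h%:E)%E ->
  (\int[mu]_x poweR (dyadic_max mu Tr phi x) q <= (h * omega_q q (powR f q / h))%:E)%E.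
Proof.
move=> _ [C [[_ HTr] HC HTrl _]] q01 h0 hF mphi iphi phi0 intf inth.
have fge0 : 0 <= f.
  rewrite -lee_fin -intf; apply: integral_ge0 => x _; rewrite lee_fin; exact: phi0.
have f0 : 0 < f.
  rewrite lt_neqAle fge0 andbT; apply/negP => /eqP f0.
  move: hF; rewrite -f0 powR0 ?gt_eqF//; last by case/andP: q01.
  by rewrite leNgt h0.
rewrite /omega_q.
exact: (main_tree HTr HC HTrl phi0 mphi iphi intf q01 f0 h0 hF inth).
Qed.
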